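(* Let $d\ge2$, $q\ge1$, $p>\widehat p_c$ and $p\notin\mathcal U(q)$, and let $\Phi$ be the infinite-volume FK measure with parameters $p,q$. Let $w_1>0$ be such that $\lim_{n\to\infty}n^{-(d-1)/d}\ln\Phi(n\le|C(0)|<\infty)=-w_1$. Then for every $x\in\mathbb{Z}^d$, $$\lim_{n\to\infty}\frac1{n^{(d-1)/d}}\ln p_x=-w_1,$$ where $p_x=\Phi(x\text{ is the mass center of an } n\text{-large cluster})$.
   Context: FK model: $\Phi$ is the common infinite-volume limit (existing for $p\notin\mathcal U(q)$, an at most countable set) of the finite-volume measures $\Phi^{\pi,p,q}_\Lambda(\omega)\propto\prod_e p^{\omega(e)}(1-p)^{1-\omega(e)}q^{\mathrm{cl}_\pi(\omega)}$ on nearest-neighbour bonds of $\mathbb{Z}^d$; it is translation invariant. $\widehat p_c$ is, for $d=2$, the critical point for exponential decay of dual connectivities and, for $d\ge3$, the limit of the critical points for percolation in slabs. It is a known result (cited) that for such $p,q$ the limit $\lim_n n^{-(d-1)/d}\ln\Phi(n\le|C(0)|<\infty)$ exists and equals $-w_1$ for some $w_1>0$. $C(0)$ is the open cluster of the origin. Mass center of finite $C$: $M_C=\lfloor\frac1{|C|}\sum_{y\in C}y\rfloor$ (coordinatewise integer parts); an $n$-large cluster is a finite cluster with $|C|\ge n$. *)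

(* Defs.v *)
From HB Require Import structures.
From mathcomp Require Import all_boot all_order all_algebra.
From mathcomp Require Import finmap.
From mathcomp Require Import all_classical all_reals all_analysis.
Set Implicit Arguments. Unset Strict Implicit. Unset Printing Implicit Defensive.
Import Order.TTheory GRing.Theory Num.Theory.
Import numFieldNormedType.Exports.
Local Open Scope classical_set_scope.
Local Open Scope ring_scope.

Definition vtx (d : nat) := {ffun 'I_d -> int}.

Definition unitv (d : nat) (i : 'I_d) : vtx d := [ffun j => ((j == i) : nat)%:Z].

(* The bond {x, x + e_i} is represented (uniquely) by the pair (x, i). *)
Definition bond (d : nat) := (vtx d * 'I_d)%type.

(* configurations omega : bonds -> {0,1} (true = open) *)
Definition config (d : nat) := bond d -> bool.

Definition adj d (om : config d) (x y : vtx d) : Prop :=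
  exists i : 'I_d, (y = x + unitv i /\ om (x, i)) \/ (x = y + unitv i /\ om (y, i)).

Definition conn d (om : config d) (x y : vtx d) : Prop :=
  exists s : seq (vtx d), path (fun a b => `[< adj om a b >]) x s /\ last x s = y.

Definition cluster d (om : config d) (x : vtx d) : set (vtx d) := [set y | conn om x y].

Definition csize d (C : set (vtx d)) : nat := #|` fset_set C |%fset.

(* mass center M_C = floor((1/|C|) sum_{y in C} y), coordinatewise;
   for k > 0, (s %/ k)%Z is the floor of s / k *)
Definition mass_center d (C : set (vtx d)) : vtx d :=
  [ffun i => ((\sum_(y <- fset_set C) y i) %/ (csize C)%:Z)%Z].

Definition large_finite_origin d (n : nat) : set (config d) :=
  [set om | finite_set (cluster om (0%R : vtx d)) /\ (n <= csize (cluster om (0%R : vtx d)))%N].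

Definition mass_center_event d (n : nat) (x : vtx d) : set (config d) :=
  [set om | exists y : vtx d, finite_set (cluster om y) /\
     (n <= csize (cluster om y))%N /\ mass_center (cluster om y) = x].

Definition cyl d : set (set (config d)) := [set [set om : config d | om e] | e in [set: bond d]].
Definition configT (d : nat) := g_sigma_algebraType (@cyl d).

Definition translate d (x : vtx d) (om : config d) : config d := fun e => om (e.1 + x, e.2).

Definition box d (N : nat) : seq (vtx d) :=
  [seq [ffun i => (f i : nat)%:Z - N%:Z] | f : {ffun 'I_d -> 'I_(N.*2.+1)}].

Definition bonds_in d (V : seq (vtx d)) : seq (bond d) :=
  [seq (x, i) | x <- V, i <- [seq i <- enum 'I_d | x + unitv i \in V]].

Definition glue d (Eb : seq (bond d)) (eta : {ffun 'I_(size Eb) -> bool})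
  (pi : config d) : config d :=
  fun e => if (insub (index e Eb) : option 'I_(size Eb)) is Some j then eta j else pi e.

Definition ncl d (V : seq (vtx d)) (om : config d) : nat :=
  \sum_(j < size V)
     (if `[< exists2 k : 'I_(size V), (k < j)%N &
              conn om (nth 0%R V k) (nth 0%R V j) >] then 0 else 1)%N.

Section FK.
Variable R : realType.

Definition fk_weight d (V : seq (vtx d)) (Eb : seq (bond d)) (pi : config d)
  (p q : R) (eta : {ffun 'I_(size Eb) -> bool}) : R :=
  (\prod_(j < size Eb) (if eta j then p else 1 - p)) * q ^+ ncl V (glue eta pi).

Definition fk_fin d (V : seq (vtx d)) (Eb : seq (bond d)) (pi : config d)
  (p q : R) (A : set (config d)) : R :=
  (\sum_(eta : {ffun 'I_(size Eb) -> bool})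
      (if `[< A (glue eta pi) >] then fk_weight V pi p q eta else 0))
  / (\sum_(eta : {ffun 'I_(size Eb) -> bool}) fk_weight V pi p q eta).

Definition fk_box d (N : nat) (pi : config d) (p q : R) (A : set (config d)) : R :=
  fk_fin (box d N) (bonds_in (box d N)) pi p q A.

(* Phi is the common infinite-volume limit (as Lambda_N grows to Z^d) of the
   measures Phi^{pi,p,q}_{Lambda_N}, for every boundary condition pi:
   convergence on every cylinder event. *)
Definition is_FK_limit d (p q : R) (Phi : probability (configT d) R) : Prop :=
  forall (pi : config d) (F : seq (bond d)) (eta : config d),
    let A := [set om : config d | forall e, e \in F -> om e = eta e] in
    (fun N : nat => fk_box N pi p q A) @ \oo --> (fine (Phi A) : R).

Definition slab d (L n : nat) : seq (vtx d) :=
  [seq x : vtx d <- box d (maxn n L) | [forall i : 'I_d,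
     if (i < 2)%N then `|x i| <= n%:Z else (0 <= x i) && (x i <= L%:Z)]].

Definition free_bc d : config d := fun _ => false.

Definition phat_slab d (q : R) (L : nat) : R :=
  inf [set p : R | 0 <= p <= 1 /\
    exists2 c : R, 0 < c & exists n0 : nat, forall n : nat, (n0 <= n)%N ->
      forall x y, x \in slab d L n -> y \in slab d L n ->
        c <= fk_fin (slab d L n) (bonds_in (slab d L n)) (@free_bc d) p q
               [set om | conn om x y]].

(* The dual vertex f stands for the face with lower-left
   corner f; the dual bond {f, f + e_i} crosses the primal bond (f + e_i, 1 - i);
   a dual bond is open iff the primal bond it crosses is closed. *)
Definition oth (i : 'I_2) : 'I_2 := if i == ord0 then ord_max else ord0.

Definition dual_adj (om : config 2) (f g : vtx 2) : Prop :=
  exists i : 'I_2, (g = f + unitv i /\ ~~ om (f + unitv i, oth i)) \/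
                   (f = g + unitv i /\ ~~ om (g + unitv i, oth i)).

Definition dual_conn (om : config 2) (f g : vtx 2) : Prop :=
  exists s : seq (vtx 2), path (fun a b => `[< dual_adj om a b >]) f s /\ last f s = g.

Definition wired_bc d : config d := fun _ => true.

Definition dual_exp_decay (p q : R) : Prop :=
  exists2 c : R, 0 < c & forall n N : nat, (n <= N)%N ->
    fk_box N (@wired_bc 2) p q
      [set om | exists g : vtx 2, (exists i, n%:Z <= `|g i|) /\ dual_conn om 0%R g]
    <= expR (- c * n%:R).

Definition phat_2 (q : R) : R := inf [set p : R | 0 <= p <= 1 /\ dual_exp_decay p q].

Definition phat_c (d : nat) (q : R) : R :=
  if d == 2%N then phat_2 q else lim ((fun L => phat_slab d q L) @ \oo).

End FK.

(* Main.v *)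
Require Import Defs.
From HB Require Import structures.
From mathcomp Require Import all_boot all_order all_algebra.
From mathcomp Require Import finmap.
From mathcomp Require Import all_classical all_reals all_analysis.
Import Order.TTheory GRing.Theory Num.Theory.
Import numFieldNormedType.Exports.
Local Open Scope classical_set_scope.
Local Open Scope ring_scope.
From mathcomp Require Import ring lra zify.
Set Implicit Arguments. Unset Strict Implicit.
Section Graph.
Variable d : nat.
Implicit Types (om : config d) (x y z a b : vtx d).

Lemma adj_translate om x a b :
  adj (translate x om) a b <-> adj om (a + x) (b + x).
Proof.
split=> -[i [[e h]|[e h]]]; exists i.
- by left; split; [rewrite e addrAC|].
- by right; split; [rewrite e addrAC|].
- by left; split=> //; apply: (addIr x); rewrite e addrAC.
- by right; split=> //; apply: (addIr x); rewrite e addrAC.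
Qed.

Lemma path_map_adj (P Q : vtx d -> vtx d -> Prop) (f : vtx d -> vtx d) a s :
  (forall u v, P u v -> Q (f u) (f v)) ->
  path (fun u v => `[< P u v >]) a s -> path (fun u v => `[< Q u v >]) (f a) (map f s).
Proof.
move=> H; elim: s a => //= c s IH a /andP[/asboolP h1 h2].
by rewrite IH // andbT; apply/asboolP; apply: H.
Qed.

Lemma conn_translate om x a b :
  conn (translate x om) a b <-> conn om (a + x) (b + x).
Proof.
split=> -[s [hp hl]].
- exists (map (fun v => v + x) s); split.
    by apply: (@path_map_adj (adj (translate x om))) => // u v /adj_translate.
  by rewrite (last_map (fun v => v + x)) hl.
- exists (map (fun v => v - x) s); split.
    have := @path_map_adj (adj om) (adj (translate x om)) (fun v => v - x) (a + x) s.
    rewrite addrK; apply=> // u v h; apply/adj_translate; by rewrite !subrK.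
  by rewrite -[a in last a _](addrK x) (last_map (fun v => v - x)) hl addrK.
Qed.

Lemma cluster_translate om x y :
  Defs.cluster (translate x om) y = (fun v => v + x) @^-1` Defs.cluster om (y + x).
Proof. by apply/seteqP; split=> v /=; rewrite /Defs.cluster /= conn_translate. Qed.

Lemma conn_refl om x : conn om x x.
Proof. by exists [::]. Qed.

End Graph.
Section Dist.
Variable d : nat.
Implicit Types (om : config d) (x y z a b v w : vtx d).

Lemma conn_trans om a b c : conn om a b -> conn om b c -> conn om a c.
Proof.
move=> [s1 [p1 l1]] [s2 [p2 l2]]; exists (s1 ++ s2).
by rewrite cat_path last_cat l1 p1 p2 l2.
Qed.

Lemma path_conn om y s w :
  path (fun a b => `[< adj om a b >]) y s -> w \in s -> conn om y w.
Proof.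
elim: s y => //= c s IH y /andP[/asboolP h hp]; rewrite inE => /orP[/eqP->|ws].
  by exists [:: c]; rewrite /= andbT; split=> //; apply/asboolP.
apply: conn_trans (IH c hp ws); exists [:: c]; rewrite /= andbT; split=> //.
by apply/asboolP.
Qed.

Lemma adj_coord om a b i : adj om a b -> `|b i - a i| <= 1.
Proof.
case=> j [[-> _]|[-> _]]; rewrite !ffunE.
  by rewrite addrAC subrr add0r; case: (i == j).
by rewrite opprD addrA subrr add0r normrN; case: (i == j).
Qed.

Lemma path_coord om y s i :
  path (fun a b => `[< adj om a b >]) y s -> `|last y s i - y i| <= (size s)%:Z.
Proof.
elim: s y => /= [|c s IH] y; first by rewrite subrr normr0.
move=> /andP[/asboolP h hp].
rewrite (le_trans (ler_distD (c i) _ _)) //.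
have -> : (size s).+1%:Z = (size s)%:Z + 1 by rewrite -addn1 PoszD.
by apply: lerD; [apply: IH | apply: adj_coord h].
Qed.

Lemma csize_gt0 om y : finite_set (Defs.cluster om y) ->
  (0 < csize (Defs.cluster om y))%N.
Proof.
move=> fC; rewrite /csize cardfs_gt0; apply/fset0Pn; exists y.
by rewrite in_fset_set // inE; apply: conn_refl.
Qed.

Lemma cluster_coord om y v i : finite_set (Defs.cluster om y) ->
  Defs.cluster om y v -> `|v i - y i| <= (csize (Defs.cluster om y))%:Z - 1.
Proof.
move=> fC [s [hp hl]]; rewrite -hl.
case: (shortenP hp) => s' hp' hu hsub.
have h1 := @path_coord om y s' i hp'; apply: (le_trans h1).
have : (size (y :: s') <= csize (Defs.cluster om y))%N.
  apply: uniq_leq_size => // w; rewrite inE in_fset_set // inE => /orP[/eqP->|ws].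
    exact: conn_refl.
  by apply: path_conn hp' ws.
move=> /= h; have h' : ((size s')%:Z + 1 <= (csize (Defs.cluster om y))%:Z).
  by rewrite -PoszD lez_nat addn1.
by rewrite lerBrDr.
Qed.

Lemma sum_const_seq (T : Type) (s : seq T) (c : int) : \sum_(v <- s) c = c * (size s)%:Z.
Proof.
elim: s => [|a s IH]; first by rewrite big_nil mulr0.
by rewrite big_cons IH /= -addn1 PoszD mulrDr mulr1 addrC.
Qed.

Lemma mc_coord om y i : finite_set (Defs.cluster om y) ->
  `|mass_center (Defs.cluster om y) i - y i| <= (csize (Defs.cluster om y))%:Z - 1.
Proof.
move=> fC; set C := Defs.cluster om y; set k := csize C.
have k0 : (0 < k)%N by apply: csize_gt0.
have k0' : (0 < k%:Z) by rewrite ltz_nat.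
have hb v : v \in fset_set C -> y i - (k%:Z - 1) <= v i <= y i + (k%:Z - 1).
  rewrite in_fset_set // inE => /(@cluster_coord om y v i fC).
  by rewrite ler_norml lerBlDl lerBrDr opprB addrC => /andP[-> ->].
set s := \sum_(v <- fset_set C) v i.
have sl : k%:Z * (y i - (k%:Z - 1)) <= s.
  rewrite /s -[X in X * _]/((#|` fset_set C|)%:Z) mulrC.
  rewrite -sum_const_seq !big_seq; apply: ler_sum => v vC; by case/andP: (hb v vC).
have sr : s <= k%:Z * (y i + (k%:Z - 1)).
  rewrite /s -[X in _ <= X * _]/((#|` fset_set C|)%:Z) mulrC.
  rewrite -sum_const_seq !big_seq; apply: ler_sum => v vC; by case/andP: (hb v vC).
rewrite /mass_center ffunE -/s -/k ler_norml; apply/andP; split.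
  rewrite -(lerD2r (y i)) subrK addrC.
  by rewrite lez_divRL // mulrC.
rewrite lerBlDr.
have := lez_floor s (d:=k%:Z); rewrite gt_eqF // => /(_ isT) hf.
rewrite -(ler_pM2r k0'); apply: (le_trans hf); by rewrite mulrC addrC.
Qed.

End Dist.
Section Shift.
Variable d : nat.
Implicit Types (om : config d) (x y z v : vtx d) (C : set (vtx d)).

Definition Ev y (P : set (vtx d) -> Prop) : set (config d) :=
  [set om | finite_set (Defs.cluster om y) /\ P (Defs.cluster om y)].

Definition shft x C : set (vtx d) := (fun v => v + x) @^-1` C.

Lemma shft_image x C : shft x C = (fun v => v - x) @` C.
Proof.
apply/seteqP; split=> v /=.
  by rewrite /shft /= => h; exists (v + x) => //; rewrite addrK.
by move=> [w Cw <-]; rewrite /shft /= subrK.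
Qed.

Lemma finite_shft x C : finite_set (shft x C) = finite_set C.
Proof.
apply/propext; split=> fC.
  have -> : C = shft (- x) (shft x C).
    by apply/seteqP; split=> v; rewrite /shft /= subrK.
  by apply: finite_preimage => // u v _ _; apply: addIr.
by apply: finite_preimage => // u v _ _; apply: addIr.
Qed.

Lemma csize_shft x C : finite_set C -> csize (shft x C) = csize C.
Proof.
move=> fC; rewrite /csize shft_image fset_set_image // card_imfset //.
by move=> u v; apply: addIr.
Qed.

Lemma mc_shft x C : finite_set C -> (0 < csize C)%N ->
  mass_center (shft x C) = mass_center C - x.
Proof.
move=> fC k0; have k := csize_shft x fC.
apply/ffunP => i; rewrite /mass_center k !ffunE.
rewrite shft_image fset_set_image // big_imfset /=; last by move=> u v _ _; apply: addIr.
under eq_bigr do rewrite ffunE.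
rewrite big_split /= sum_const_seq.
rewrite -[#|` _|]/(csize C) ffunE addrC divzMDl; last by rewrite eqz_nat -lt0n.
by rewrite addrC.
Qed.

Lemma Ev_translate x z P :
  (translate x) @^-1` (Ev z P) = Ev (z + x) (fun C => P (shft x C)).
Proof.
apply/seteqP; split=> om /=; rewrite /Ev /= cluster_translate -/(shft x _) finite_shft //.
Qed.

End Shift.
Section Meas.
Variable d : nat.
Implicit Types (om : config d) (x y z a b v : vtx d).

Lemma cyl_meas e : measurable ([set om : configT d | om e]).
Proof. by apply: sub_sigma_algebra; exists e. Qed.

Lemma condset_meas (P : Prop) e : measurable ([set om : configT d | P /\ om e]).
Proof.
case: (pselect P) => h.
  have -> : [set om : configT d | P /\ om e] = [set om | om e].
    by apply/seteqP; split=> om /=; [case|split].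
  exact: cyl_meas.
have -> : [set om : configT d | P /\ om e] = set0.
  by apply/seteqP; split=> om /=; [case|].
exact: measurable0.
Qed.

Lemma adj_meas a b : measurable ([set om : configT d | adj om a b]).
Proof.
have -> : [set om : configT d | adj om a b] =
  \bigcup_(i : 'I_d) ([set om : configT d | b = a + unitv i /\ om (a, i)] `|`
                      [set om : configT d | a = b + unitv i /\ om (b, i)]).
  by apply/seteqP; split=> om /=; [move=> [i h]; exists i | move=> [i _ h]; exists i].
apply: countable_bigcupT_measurable; first exact: countableP.
by move=> i; apply: measurableU; apply: condset_meas.
Qed.

Lemma path_meas a s :
  measurable ([set om : configT d | path (fun u v => `[< adj om u v >]) a s]).
Proof.
elim: s a => [|c s IH] a /=.
  have -> : [set om : configT d | true] = setT by apply/seteqP; split.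
  exact: measurableT.
have -> : [set om : configT d | `[< adj om a c >] && path (fun u v => `[< adj om u v >]) c s]
  = [set om : configT d | adj om a c] `&` [set om : configT d | path (fun u v => `[< adj om u v >]) c s].
  by apply/seteqP; split=> om /=; [move=> /andP[/asboolP ? ?] | move=> [? ?]; apply/andP; split=> //; apply/asboolP].
by apply: measurableI; [apply: adj_meas | apply: IH].
Qed.

Lemma conn_meas a b : measurable ([set om : configT d | conn om a b]).
Proof.
have -> : [set om : configT d | conn om a b] =
  \bigcup_(s : seq (vtx d)) (if last a s == b then
      [set om : configT d | path (fun u v => `[< adj om u v >]) a s] else set0).
  apply/seteqP; split=> om /=.
    by move=> [s [hp hl]]; exists s => //; rewrite hl eqxx.
  by move=> [s _]; case: eqP => // hl hp; exists s.
apply: countable_bigcupT_measurable; first exact: countableP.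
by move=> s; case: eqP => _; [apply: path_meas | apply: measurable0].
Qed.

Lemma clEq_meas y (S : {fset vtx d}) :
  measurable ([set om : configT d | Defs.cluster om y = [set` S]]).
Proof.
have -> : [set om : configT d | Defs.cluster om y = [set` S]] =
  ~` \bigcup_(v : vtx d) (if v \in S then ~` [set om : configT d | conn om y v]
                          else [set om : configT d | conn om y v]).
  apply/seteqP; split=> om /=.
    move=> h [v _]; have : Defs.cluster om y v <-> [set` S] v by rewrite h.
    rewrite /Defs.cluster /=; case: (v \in S) => /= -[h1 h2].
      by apply; apply: h2.
    by move=> /h1.
  move=> h; apply/seteqP; split=> v /=.
    move=> c; case: (boolP (v \in S)) => // vS; exfalso; apply: h; exists v => //.
    by rewrite (negbTE vS).
  move=> vS; apply: contrapT => c; apply: h; exists v => //; by rewrite vS.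
apply: measurableC; apply: countable_bigcupT_measurable; first exact: countableP.
by move=> v; case: (v \in S); [apply: measurableC|]; apply: conn_meas.
Qed.

Lemma Ev_meas y P : measurable (Ev y P : set (configT d)).
Proof.
have -> : (Ev y P : set (configT d)) =
  \bigcup_(S : {fset vtx d}) (if `[< P [set` S] >] then
     [set om : configT d | Defs.cluster om y = [set` S]] else set0).
  apply/seteqP; split=> om /=.
    move=> [fC PC]; exists (fset_set (Defs.cluster om y)) => //.
    by rewrite fset_setK //; case: asboolP.
  move=> [S _]; case: asboolP => // PS /= h; rewrite /Ev /= h; split=> //.
  exact: finite_fset.
apply: countable_bigcupT_measurable; first exact: countableP.
by move=> S; case: asboolP => _; [apply: clEq_meas | apply: measurable0].
Qed.

End Meas.
Section Prob.
Variable d : nat.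
Variable R : realType.
Variable Phi : probability (configT d) R.
Local Notation P A := (fine (Phi A)).

Lemma PhiE (A : set (configT d)) : measurable A -> Phi A = (P A)%:E.
Proof.
move=> mA; rewrite fineK // ge0_fin_numE ?measure_ge0 //.
by apply: (le_lt_trans (probability_le1 Phi mA)); rewrite ltry.
Qed.

Lemma P_ge0 (A : set (configT d)) : measurable A -> 0 <= P A.
Proof. by move=> mA; rewrite -lee_fin -PhiE // measure_ge0. Qed.

Lemma P_le1 (A : set (configT d)) : measurable A -> P A <= 1.
Proof. by move=> mA; rewrite -lee_fin -PhiE // probability_le1. Qed.

Lemma P_mono (A B : set (configT d)) : measurable A -> measurable B ->
  A `<=` B -> P A <= P B.
Proof.
move=> mA mB AB; rewrite -lee_fin -!PhiE //.
by apply: le_measure => //; rewrite inE.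
Qed.

Lemma P_sub (I : eqType) (s : seq I) (F : I -> set (configT d)) (A : set (configT d)) :
  measurable A -> (forall i, measurable (F i)) ->
  (forall om, A om -> exists2 i, i \in s & F i om) ->
  P A <= \sum_(i <- s) P (F i).
Proof.
move=> + mF; elim: s A => [|i s IH] A mA hA.
  have -> : A = set0 by apply/seteqP; split=> om // /hA [].
  by rewrite measure0 big_nil.
rewrite big_cons.
have mAD : measurable (A `\` F i) by apply: measurableD.
have sub : A `<=` F i `|` (A `\` F i).
  by move=> om Aom; case: (pselect (F i om)) => h; [left|right].
have mU : measurable (F i `|` (A `\` F i)) by apply: measurableU.
have := @P_mono A (F i `|` (A `\` F i)) mA mU sub => h1.
apply: (le_trans h1).
rewrite -lee_fin -!PhiE ?EFinD; last by apply: measurableU.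
apply: (le_trans (measureU2 _ _ _)) => //.
apply: leeD; first by rewrite -PhiE.
suff h : (Phi (A `\` F i) <= (\sum_(j <- s) P (F j))%:E)%E by exact: h.
rewrite (PhiE mAD) lee_fin; apply: IH => // om [Aom nF].
case: (hA om Aom) => j; rewrite inE => /orP[/eqP ->|js] h //.
by exists j.
Qed.

Lemma P_count (F : nat -> set (configT d)) (A : set (configT d)) (B : R) :
  measurable A -> (forall n, measurable (F n)) ->
  A `<=` \bigcup_n F n ->
  (forall K, \sum_(n < K) P (F n) <= B) -> P A <= B.
Proof.
move=> mA mF sub hB; rewrite -lee_fin -PhiE //.
have h := measure_sigma_subadditive Phi mF mA sub.
apply: (le_trans h).
apply: lime_le; first by apply: is_cvg_nneseries => n _ _; apply: measure_ge0.
apply: nearW => K; rewrite /=.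
rewrite (eq_bigr (fun n => (P (F n))%:E)); last by move=> n _; rewrite -PhiE.
by rewrite big_mkord sumEFin lee_fin.
Qed.

End Prob.
Section Box.
Variable d : nat.

Definition BX (N : nat) := {ffun 'I_d -> 'I_(N.*2.+1)}.
Definition pt (N : nat) (c : vtx d) (f : BX N) : vtx d :=
  c + [ffun i => (f i : nat)%:Z - N%:Z].

Lemma box_cover N (c z : vtx d) : (forall i, `|z i - c i| <= N%:Z) ->
  exists f : BX N, z = pt c f.
Proof.
move=> h.
exists [ffun i => inord (absz (z i - c i + N%:Z))].
apply/ffunP => i; rewrite /pt !ffunE.
have /andP[h1 h2] : 0 <= z i - c i + N%:Z <= (N.*2)%:Z.
  move: (h i); rewrite ler_norml => /andP[l r]; apply/andP; split.
    by rewrite -lerBlDr sub0r.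
  by rewrite -addnn PoszD lerD2r.
rewrite inordK; last first.
  by rewrite ltnS -lez_nat gez0_abs.
by rewrite gez0_abs // addrK addrC subrK.
Qed.

Lemma card_BX N : #|{: BX N}| = (N.*2.+1 ^ d)%N.
Proof. by rewrite card_ffun card_ord card_ord. Qed.

End Box.

Section Key.
Variable d : nat.
Variable R : realType.
Variable Phi : probability (configT d) R.
Hypothesis hT : forall (x : vtx d) (A : set (configT d)), measurable A ->
      Phi ((@translate d x) @^-1` A) = Phi A.
Local Notation P A := (fine (Phi A)).

Lemma Ev_ext (y : vtx d) (Q1 Q2 : set (vtx d) -> Prop) :
  (forall C, finite_set C -> Q1 C <-> Q2 C) -> Ev y Q1 = Ev y Q2.
Proof.
move=> h; apply/seteqP; split=> om [fC QC]; split=> //; by apply/(h _ fC).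
Qed.

Lemma P_Ev_translate (t z : vtx d) Q :
  P (Ev (z + t) (fun C => Q (shft t C)) : set (configT d)) = P (Ev z Q : set (configT d)).
Proof. by rewrite -Ev_translate hT //; apply: Ev_meas. Qed.

Lemma mc_event_Ev n x :
  mass_center_event n x =
  \bigcup_(y : vtx d) Ev y (fun C => (n <= csize C)%N /\ mass_center C = x).
Proof.
apply/seteqP; split=> om /=.
  by move=> [y [fC [h1 h2]]]; exists y.
by move=> [y _ [fC [h1 h2]]]; exists y.
Qed.

Lemma mc_meas n x : measurable (mass_center_event n x : set (configT d)).
Proof.
rewrite mc_event_Ev; apply: countable_bigcupT_measurable; first exact: countableP.
by move=> y; apply: Ev_meas.
Qed.

Lemma large_Ev n : @large_finite_origin d n = Ev 0 (fun C => (n <= csize C)%N).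
Proof. by []. Qed.

Lemma large_meas n : measurable (large_finite_origin n : set (configT d)).
Proof. by rewrite large_Ev; apply: Ev_meas. Qed.

(* translation of the size event to the origin *)
Lemma P_size (y : vtx d) m :
  P (Ev y (fun C => csize C = m) : set (configT d)) <= P (large_finite_origin m : set (configT d)).
Proof.
have -> : Ev y (fun C => csize C = m) = Ev (0 + y) (fun C => csize (shft y C) = m).
  rewrite add0r; apply: Ev_ext => C fC; by rewrite csize_shft.
rewrite (P_Ev_translate y 0 (fun C => csize C = m)); apply: P_mono; [apply: Ev_meas|apply: large_meas|].
by move=> om [fC h]; split=> //; rewrite h.
Qed.

Lemma P_centered n (x w : vtx d) : (0 < n)%N ->
  P (Ev 0 (fun C => ((n <= csize C)%N && (csize C <= n.*2)%N) /\ mass_center C = w)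
       : set (configT d))
  <= P (mass_center_event n x : set (configT d)).
Proof.
move=> n0; rewrite -(P_Ev_translate (x - w)).
apply: P_mono; [apply: Ev_meas|apply: mc_meas|].
move=> om [fC [/andP[h1 h2] h3]]; rewrite add0r in fC h1 h3.
exists (x - w); split=> //.
rewrite csize_shft // in h1; rewrite mc_shft // in h3; last by apply: leq_trans h1.
split=> //; by move/eqP: h3; rewrite subr_eq [w + _]addrC subrK => /eqP.
Qed.

End Key.
Section Ineq.
Variable d : nat.
Variable R : realType.
Variable Phi : probability (configT d) R.
Hypothesis hT : forall (x : vtx d) (A : set (configT d)), measurable A ->
      Phi ((@translate d x) @^-1` A) = Phi A.
Local Notation P A := (fine (Phi A)).
Local Notation a m := (P (@large_finite_origin d m : set (configT d))).

Lemma sum_enum_const (T : finType) (c : R) : \sum_(f <- enum T) c = (#|T|%:R) * c.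
Proof. by rewrite big_enum sumr_const mulr_natl. Qed.

Lemma ineqL n x : (0 < n)%N ->
  a n <= ((n.*2).*2.+1 ^ d)%:R * P (mass_center_event n x : set (configT d)) + a (n.*2.+1).
Proof.
move=> n0; set N := n.*2.
pose Q (w : vtx d) (C : set (vtx d)) :=
  ((n <= csize C)%N && (csize C <= N)%N) /\ mass_center C = w.
pose F (o : option (BX d N)) : set (configT d) :=
  if o is Some f then Ev 0 (Q (pt 0 f)) else large_finite_origin N.+1.
have mF o : measurable (F o).
  by case: o => [f|]; [apply: Ev_meas | apply: large_meas].
have := @P_sub d R Phi _ (None :: map Some (enum {: BX d N})) F
   (large_finite_origin n) (large_meas n) mF.
move=> /(_ _) h; apply: le_trans (h _) _.
  move=> om [fC hC]; case: (leqP N.+1 (csize (Defs.cluster om 0))) => hN.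
    by exists None; rewrite ?inE ?eqxx //.
  have [f ef] : exists f : BX d N, mass_center (Defs.cluster om 0) = pt 0 f.
    apply: box_cover => i; apply: (le_trans (mc_coord i fC)).
    rewrite lerBlDr -PoszD lez_nat addn1; exact: ltnW hN.
  exists (Some f); first by rewrite inE map_f ?mem_enum ?orbT.
  by split=> //; split=> //; apply/andP; split=> //; rewrite -ltnS.
rewrite big_cons big_map addrC; apply: lerD => //.
have -> : ((N.*2.+1 ^ d)%:R * P (mass_center_event n x : set (configT d))) =
   \sum_(f <- enum {: BX d N}) P (mass_center_event n x : set (configT d)).
  by rewrite sum_enum_const card_BX.
apply: ler_sum => f _; exact: P_centered.
Qed.

Lemma ineqU n x B :
  (forall K, \sum_(k < K) (((k + n).*2.+1 ^ d)%:R * a (k + n)%N) <= B) ->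
  P (mass_center_event n x : set (configT d)) <= B.
Proof.
move=> hB.
pose F (k : nat) : set (configT d) :=
  \bigcup_(f : BX d (k + n)) Ev (pt x f) (fun C => csize C = (k + n)%N).
have mF k : measurable (F k).
  apply: countable_bigcupT_measurable; first exact: countableP.
  by move=> f; apply: Ev_meas.
apply: (P_count (F := F)) => //; first exact: mc_meas.
  move=> om [y [fC [h1 h2]]]; exists (csize (Defs.cluster om y) - n)%N => //.
  have e : (csize (Defs.cluster om y) - n + n)%N = csize (Defs.cluster om y) by rewrite subnK.
  have [f ef] : exists f : BX d (csize (Defs.cluster om y) - n + n), y = pt x f.
    apply: box_cover => i; rewrite e distrC -h2.
    apply: (le_trans (mc_coord i fC)); by rewrite gerBl.
  by exists f => //; rewrite /Ev /= -ef; split.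
move=> K; apply: le_trans (hB K); apply: ler_sum => k _.
have -> : (((k + n).*2.+1 ^ d)%:R * a (k + n)) =
   \sum_(f <- enum {: BX d (k + n)}) a (k + n).
  by rewrite sum_enum_const card_BX.
apply: (le_trans (@P_sub d R Phi _ (enum {: BX d (k + n)})
   (fun f => Ev (pt x f) (fun C => csize C = (k + n)%N)) (F k) (mF k) _ _)).
- by move=> f; apply: Ev_meas.
- by move=> om [f _ h]; exists f; rewrite ?mem_enum.
apply: ler_sum => f _; exact: P_size.
Qed.

End Ineq.
Section An.
Variable R : realType.

Lemma PolyExp (e : R) (D : nat) : 0 < e ->
  exists2 C : R, 0 < C & forall m : nat,
    (m.+1%:R : R) ^+ D <= C * expR (e * Num.sqrt (m%:R)).
Proof.
move=> e0; set J := ((D.+1).*2)%N.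
have J0 : (0 : R) < J%:R by rewrite ltr0n /J double_gt0.
set c := Num.min 1 (e / J%:R).
have c0 : 0 < c by rewrite lt_min ltr01 divr_gt0.
have c1 : c <= 1 by rewrite ge_min lexx.
have ce : J%:R * c <= e.
  have H : c <= e / J%:R by rewrite ge_min lexx orbT.
  have := ler_wpM2l (ltW J0) H; by rewrite mulrCA mulfV ?gt_eqF // mulr1.
set k := c ^+ 2.
have k0 : 0 < k by rewrite exprn_gt0.
exists ((k ^+ D.+1)^-1); first by rewrite invr_gt0 exprn_gt0.
move=> m; set s := Num.sqrt (m%:R : R).
have s0 : 0 <= s by apply: sqrtr_ge0.
have ss : s ^+ 2 = m%:R by rewrite sqr_sqrtr // ler0n.
rewrite mulrC -ler_pdivrMr ?invr_gt0 ?exprn_gt0 // invrK.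
have h1 : expR (c * s) ^+ J <= expR (e * s).
  by rewrite -expRM_natl ler_expR mulrA ler_wpM2r.
have h2 : (1 + c * s) ^+ J <= expR (c * s) ^+ J.
  apply: lerXn2r; rewrite ?nnegrE ?expR_ge0 ?expR_ge1Dx //.
  by apply: addr_ge0 => //; apply: mulr_ge0 => //; apply: ltW.
have h3 : k * m.+1%:R <= (1 + c * s) ^+ 2.
  have cc : c ^+ 2 <= 1 by rewrite expr_le1 // ltW.
  rewrite /k -natr1 -ss; nra.
apply: (le_trans _ (le_trans h2 h1)).
rewrite /J -mul2n exprM.
apply: (le_trans _ (lerXn2r _ _ _ h3)); last 2 first.
- by rewrite nnegrE mulr_ge0 // ltW.
- by rewrite nnegrE sqr_ge0.
rewrite [X in _ <= X]exprMn [X in X <= _]mulrC; apply: ler_wpM2l; first by rewrite exprn_ge0 // ltW.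
rewrite exprS -[X in X <= _]mul1r; apply: ler_wpM2r; first by rewrite exprn_ge0 // ler0n.
by rewrite ler1n.
Qed.

End An.
Section Lfacts.
Variable R : realType.
Variable d : nat.
Hypothesis d2 : (2 <= d)%N.

Definition al : R := (d%:R - 1) / d%:R.
Definition ll (n : nat) : R := n%:R `^ al.

Lemma dR : (2 : R) <= d%:R.
Proof. by rewrite ler_nat. Qed.

Lemma al_gt0 : 0 < al.
Proof. have := dR; rewrite /al => h; rewrite divr_gt0 //; lra. Qed.

Lemma al_ge12 : 2^-1 <= al.
Proof.
have := dR; rewrite /al => h; rewrite ler_pdivlMr; last by lra.
lra.
Qed.

Lemma al_le1 : al <= 1.
Proof. have := dR; rewrite /al => h; rewrite ler_pdivrMr; last by lra. lra. Qed.

Lemma ll_ge0 n : 0 <= ll n.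
Proof. exact: powR_ge0. Qed.

Lemma ll_gt0 n : (0 < n)%N -> 0 < ll n.
Proof. by move=> n0; apply: powR_gt0; rewrite ltr0n. Qed.

Lemma ll_sqrt n : Num.sqrt (n%:R) <= ll n.
Proof.
case: n => [|n].
  by rewrite /ll powR0 ?sqrtr0 // gt_eqF // al_gt0.
rewrite -powR12_sqrt ?ler0n //; apply: ler_powR; last exact: al_ge12.
by rewrite ler1n.
Qed.

Lemma ll_mono m n : (m <= n)%N -> ll m <= ll n.
Proof.
move=> mn; apply: ge0_ler_powR; rewrite ?nnegrE ?ler0n ?ler_nat //.
exact: ltW al_gt0.
Qed.

Definition gam : R := 2 `^ al.

Lemma gam_gt1 : 1 < gam.
Proof.
have h1 : (1:R) `^ al = 1 by rewrite powR1.
rewrite /gam -[X in X < _]h1; apply: gt0_ltr_powR; rewrite ?nnegrE //.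
  exact: al_gt0.
by rewrite ltr1n.
Qed.

Lemma gam_le2 : gam <= 2.
Proof.
rewrite /gam -[X in _ <= X](@powRr1 _ 2) //; apply: ler_powR => //; last exact: al_le1.
by rewrite ler1n.
Qed.

Lemma ll_double n : gam * ll n <= ll (n.*2.+1).
Proof.
apply: (@le_trans _ _ (ll n.*2)); last by apply: ll_mono.
by rewrite /ll /gam -powRM // -natrM mul2n.
Qed.

Lemma ll_large (M : R) : exists N, forall n, (N <= n)%N -> M <= ll n.
Proof.
exists (Num.trunc (M ^+ 2)).+1 => n hn.
apply: le_trans (ll_sqrt n).
apply: (@le_trans _ _ (Num.sqrt (M ^+ 2))); first by rewrite sqrtr_sqr ler_norm.
rewrite ler_sqrt ?ler0n //.
apply: ltW; apply: (lt_le_trans (truncnS_gt _)); by rewrite ler_nat.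
Qed.

End Lfacts.
Section Ratio.
Variable R : realType.

Lemma ratio_bounds (x L w eps : R) : 0 < L -> 0 < eps -> eps < w ->
  `|- w - ln x / L| <= eps ->
  [/\ 0 < x, expR (- (w + eps) * L) <= x & x <= expR (- (w - eps) * L)].
Proof.
move=> L0 e0 ew; rewrite ler_norml => /andP[h1 h2].
case: (lerP x 0) => hx.
  by move: h1 h2; rewrite ln0 // mul0r subr0 => h1 h2; lra.
have hr1 : - (w + eps) <= ln x / L by lra.
have hr2 : ln x / L <= - (w - eps) by lra.
rewrite ler_pdivlMr // in hr1; rewrite ler_pdivrMr // in hr2.
split=> //.
  by rewrite -[x in _ <= x]lnK ?posrE // ler_expR.
by rewrite -[x in x <= _]lnK ?posrE // ler_expR.
Qed.

Lemma ratio_from_bounds (y L w eps K1 S0 : R) : 0 < L -> 0 < K1 -> 0 < S0 ->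
  expR (- (w + 2 * eps) * L) / K1 <= y ->
  y <= S0 * expR (- (w - 2 * eps) * L) ->
  `|ln K1| <= eps * L -> `|ln S0| <= eps * L ->
  `|- w - ln y / L| <= 3 * eps.
Proof.
move=> L0 K0 S00 hl hu hK hS.
have E0 : 0 < expR (- (w + 2 * eps) * L) / K1 by rewrite divr_gt0 ?expR_gt0.
have y0 : 0 < y by apply: lt_le_trans hl.
have l1 : - (w + 2 * eps) * L - ln K1 <= ln y.
  have : ln (expR (- (w + 2 * eps) * L) / K1) <= ln y by rewrite ler_ln ?posrE.
  by rewrite lnM ?posrE ?expR_gt0 ?invr_gt0 // expRK lnV ?posrE.
have l2 : ln y <= ln S0 + - (w - 2 * eps) * L.
  have : ln y <= ln (S0 * expR (- (w - 2 * eps) * L)).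
    by rewrite ler_ln ?posrE ?mulr_gt0 ?expR_gt0.
  by rewrite lnM ?posrE ?expR_gt0 // expRK.
move: hK hS; rewrite !ler_norml => /andP[k1 k2] /andP[s1 s2].
have t1 : - (w + 3 * eps) <= ln y / L by rewrite ler_pdivlMr //; lra.
have t2 : ln y / L <= - (w - 3 * eps) by rewrite ler_pdivrMr //; lra.
lra.
Qed.

End Ratio.
Section SumSq.
Variable R : realType.

Lemma inv_sq_step (t : R) : 1 <= t -> (t ^+ 2)^-1 <= 2 / t - 2 / (t + 1).
Proof.
move=> t1.
have t0 : 0 < t by lra.
have t10 : 0 < t + 1 by lra.
have -> : 2 / t - 2 / (t + 1) = (2 * t / (t + 1)) / t ^+ 2.
  by field; rewrite ?gt_eqF.
rewrite ler_pdivlMr ?exprn_gt0 // mulVf ?gt_eqF ?exprn_gt0 //.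
by rewrite ler_pdivlMr // mul1r; lra.
Qed.

Lemma inv_sq_sum (n K : nat) :
  \sum_(k < K) (((k + n).+1%:R : R) ^+ 2)^-1 <= 2.
Proof.
suff h : \sum_(k < K) (((k + n).+1%:R : R) ^+ 2)^-1 <= 2 / (n.+1%:R) - 2 / ((K + n).+1%:R).
  apply: le_trans h _.
  have : 0 <= 2 / ((K + n).+1%:R : R) by rewrite divr_ge0 ?ler0n.
  have : 2 / (n.+1%:R : R) <= 2.
    by rewrite ler_pdivrMr ?ltr0n // ler_pMr // ler1n.
  by move=> H1 H2; apply: le_trans H1; rewrite gerBl.
elim: K => [|K IH]; first by rewrite big_ord0 add0n subrr.
rewrite big_ord_recr /=.
have h := @inv_sq_step ((K + n).+1%:R : R) ltac:(by rewrite ler1n).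
apply: le_trans (lerD IH h) _.
by rewrite addrA subrK addSn -[((K + n).+2)%:R]natr1.
Qed.

End SumSq.
Section Helpers.
Variable R : realType.

Lemma low_bound (E X P4 b Q K1 : R) : 0 < E -> 2 <= X -> E / 2 <= P4 * b -> 0 < P4 ->
  P4 <= Q -> K1 * X = 2 * Q -> 0 < K1 -> (E / X) / K1 <= b.
Proof.
move=> E0 X2 h1 P0 PQ hKX K0.
have X0 : 0 < X by lra.
have b0 : 0 <= b.
  rewrite leNgt; apply/negP => bn.
  have : P4 * b < 0 by rewrite pmulr_rlt0.
  have : 0 < E / 2 by lra.
  lra.
rewrite ler_pdivrMr // ler_pdivrMr // -mulrA hKX.
nra.
Qed.

Lemma term_bound (P2 A pm X' Y Z C2 T : R) (d : nat) : 0 <= A -> A <= Y -> 0 <= P2 ->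
  P2 <= T * pm ^+ d -> 0 < pm -> pm ^+ (d + 2) <= C2 * X' -> 0 <= X' -> X' * Y <= Z ->
  0 <= T -> 0 <= C2 -> P2 * A <= (T * C2 * Z) / pm ^+ 2.
Proof.
move=> A0 AY P0 PT pm0 pC X0 XY T0 C0.
have p2 : 0 < pm ^+ 2 by rewrite exprn_gt0.
rewrite ler_pdivlMr //.
have e1 : P2 * A * pm ^+ 2 <= T * pm ^+ (d + 2) * A.
  rewrite exprD [T * _ * A]mulrC [P2 * A]mulrC -mulrA; apply: ler_wpM2l => //.
  rewrite mulrA; apply: ler_wpM2r => //; exact: ltW.
apply: (le_trans e1).
have e2 : T * pm ^+ (d + 2) * A <= T * (C2 * X') * A.
  apply: ler_wpM2r => //; apply: ler_wpM2l => //.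
apply: (le_trans e2).
rewrite -mulrA -[T * C2 * Z]mulrA; apply: ler_wpM2l => //.
rewrite -mulrA; apply: ler_wpM2l => //.
apply: le_trans XY; apply: ler_wpM2l => //.
Qed.

End Helpers.
Section SmallArith.
Variable R : realType.
Implicit Types w eps e L Lm g E X an P b : R.
Lemma sa1 w eps : 0 < w -> eps <= w / 3 -> 0 < eps -> eps < w. Proof. move=> *; lra. Qed.
Lemma sa2 eps e : eps <= e / 3 -> 3 * eps <= e. Proof. move=> *; lra. Qed.
Lemma sa3 eps L : 1 <= eps * L -> 2 <= 1 + eps * L. Proof. move=> *; lra. Qed.
Lemma sa4 E X (a2 : R) an P b : 0 < E -> E / X <= E / 2 -> a2 <= E / X -> E <= an ->
  an <= P * b + a2 -> E / 2 <= P * b.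
Proof. move=> *; lra. Qed.
Lemma sa5 w eps g : 0 < w -> 1 < g -> eps * (g + 2) <= w * (g - 1) ->
  w + 2 * eps <= (w - eps) * g.
Proof. move=> *; nra. Qed.
Lemma sa6 w eps g L (L2 : R) : 0 <= L -> g * L <= L2 -> 0 <= w - eps ->
  w + 2 * eps <= (w - eps) * g -> - (w - eps) * L2 <= - (w + 2 * eps) * L.
Proof. move=> *; nra. Qed.
Lemma sa7 w eps L Lm : 0 <= L -> L <= Lm -> 0 <= w - 2 * eps ->
  eps * Lm + - (w - eps) * Lm <= - (w - 2 * eps) * L.
Proof. move=> *; nra. Qed.
Lemma sa8 eps w : 0 < eps -> eps <= w / 3 -> 0 <= w - eps.
Proof. move=> *; lra. Qed.
Lemma sa9 eps w : 0 < eps -> eps <= w / 3 -> 0 <= w - 2 * eps.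
Proof. move=> *; lra. Qed.
End SmallArith.
Lemma na1 n : (n.*2.*2.+1 <= 4 * n.+1)%N. Proof. lia. Qed.
Lemma na2 m : (m.*2.+1 <= 2 * m.+1)%N. Proof. lia. Qed.
Lemma na3 n N1 : (N1 <= n)%N -> (N1 <= n.*2.+1)%N. Proof. lia. Qed.

Section MainAn.
Variable R : realType.
Variable d : nat.
Hypothesis d2 : (2 <= d)%N.
Local Notation l := (@ll R d).

Lemma ev_of_cvg (f : nat -> R) (y : R) : f @ \oo --> y ->
  forall eps : R, 0 < eps -> exists N, forall n, (N <= n)%N -> `|y - f n| <= eps.
Proof. move=> /cvgrPdist_le h eps e0; have [N _ hN] := h eps e0; by exists N. Qed.

Theorem an_main (a b : nat -> R) (w1 : R) :
  0 < w1 ->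
  (forall n, 0 <= a n) ->
  (forall n, (0 < n)%N -> a n <= ((n.*2.*2.+1 ^ d)%:R) * b n + a (n.*2.+1)) ->
  (forall n B, (forall K, \sum_(k < K) (((k + n).*2.+1 ^ d)%:R * a (k + n)%N) <= B) -> b n <= B) ->
  (fun n => ln (a n) / l n) @ \oo --> - w1 ->
  (fun n => ln (b n) / l n) @ \oo --> - w1.
Proof.
move=> w0 a0 hL hU hA.
apply/cvgrPdist_le => e e0.
have g1 := gam_gt1 R d2; have g2 := gam_le2 R d2.
set g := gam R d in g1 g2.
set eps0 := w1 * (g - 1) / (g + 2).
have g20 : 0 < g + 2 by rewrite addr_gt0 // (lt_trans ltr01 g1).
have eps00 : 0 < eps0 by rewrite /eps0 divr_gt0 ?mulr_gt0 ?subr_gt0.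
set eps := Num.min (e / 3) (Num.min eps0 (w1 / 3)).
have ep0 : 0 < eps by rewrite !lt_min eps00 !divr_gt0.
have ep1 : eps <= e / 3 by rewrite ge_min lexx.
have ep2 : eps <= eps0 by rewrite ge_min ge_min lexx orbT.
have ep3 : eps <= w1 / 3 by rewrite ge_min ge_min lexx !orbT.
have key1 : w1 + 2 * eps <= (w1 - eps) * g.
  have : eps * (g + 2) <= w1 * (g - 1) by rewrite -ler_pdivlMr.
  by apply: sa5.
have [N1 hN1] := ev_of_cvg hA ep0.
have [C4 C40 hC4] := PolyExp d ep0.
have [C2 C20 hC2] := PolyExp (d + 2) ep0.
set K1 := 2 * (4 ^+ d * C4).
set S0 := 2 ^+ d * C2 * 2.
have K10 : 0 < K1 by rewrite /K1 mulr_gt0 ?mulr_gt0 ?exprn_gt0.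
have S00 : 0 < S0 by rewrite /S0 !mulr_gt0 ?exprn_gt0.
have [N2 hN2] := @ll_large R d d2 (Num.max (eps^-1) (Num.max (`|ln K1| / eps) (`|ln S0| / eps))).
exists (maxn (maxn N1 N2) 1) => // n /=; rewrite !geq_max => /andP[/andP[nN1 nN2] n1].
have Lm := hN2 n nN2; rewrite !ge_max in Lm; case/and3P: Lm => Le LK LS.
set L := l n.
have L0 : 0 < L by apply: ll_gt0.
have eL1 : 1 <= eps * L by rewrite -ler_pdivrMl // mulr1.
have eLK : `|ln K1| <= eps * L by rewrite -ler_pdivrMl // mulrC.
have eLS : `|ln S0| <= eps * L by rewrite -ler_pdivrMl // mulrC.
have ew : eps < w1 by apply: sa1.
have ab m : (N1 <= m)%N -> (0 < m)%N ->
    [/\ 0 < a m, expR (- (w1 + eps) * l m) <= a m & a m <= expR (- (w1 - eps) * l m)].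
  by move=> h1 h2; apply: ratio_bounds => //; [apply: ll_gt0 | apply: hN1].
have e3 : 3 * eps <= e by apply: sa2.
apply: le_trans e3.
apply: (ratio_from_bounds L0 K10 S00 _ _ eLK eLS).
-
  have [an0 an1 an2] := ab n nN1 n1.
  have [_ _ a21] := ab n.*2.+1 (na3 nN1) isT.
  set E := expR (- (w1 + eps) * L).
  set X := expR (eps * L).
  have X2 : 2 <= X by apply: le_trans (expR_ge1Dx _); apply: sa3.
  have EX : expR (- (w1 + 2 * eps) * L) = E / X.
    by rewrite /E /X -expRN -expRD; congr expR; ring.
  have a2 : a n.*2.+1 <= E / X.
    rewrite -EX; apply: le_trans a21 _; rewrite ler_expR.
    have := ll_double R d2 n; rewrite -/g -/L => hd.
    by apply: (sa6 (ltW L0) hd (sa8 ep0 ep3) key1).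
  have E0 : 0 < E by apply: expR_gt0.
  have EX2 : E / X <= E / 2.
    by rewrite ler_pdivrMr ?(lt_le_trans _ X2) // mulrAC ler_pdivlMr // ler_wpM2l // ltW.
  set P4 := ((n.*2.*2.+1 ^ d)%:R : R).
  have P40 : 0 < P4 by rewrite ltr0n expn_gt0.
  have hP4 : P4 <= 4 ^+ d * C4 * X.
    apply: (@le_trans _ _ (4 ^+ d * n.+1%:R ^+ d)).
      rewrite /P4 natrX -exprMn; apply: lerXn2r; rewrite ?nnegrE ?ler0n ?mulr_ge0 //.
      by rewrite -natrM ler_nat na1.
    rewrite -mulrA; apply: ler_wpM2l; first by rewrite exprn_ge0.
    apply: le_trans (hC4 n) _; apply: ler_wpM2l; first exact: ltW.
    by rewrite ler_expR; apply: ler_wpM2l; [exact: ltW | exact: (@ll_sqrt R d d2 n)].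
  rewrite EX; apply: (low_bound E0 X2 _ P40 hP4); last exact: K10.
    have := hL n n1; rewrite -/P4 => h; exact: (sa4 E0 EX2 a2 an1 h).
  by rewrite /K1 -mulrA.
-
  apply: hU => K.
  rewrite -/S0 (_ : S0 * expR (- (w1 - 2 * eps) * L) =
     (2 ^+ d * C2 * expR (- (w1 - 2 * eps) * L)) * 2); last by rewrite /S0; ring.
  apply: le_trans (_ : \sum_(k < K) ((2 ^+ d * C2 * expR (- (w1 - 2 * eps) * L))
            * ((k + n).+1%:R ^+ 2)^-1) <= _).
    apply: ler_sum => k _.
    have m1 : (0 < k + n)%N by rewrite addn_gt0 n1 orbT.
    have mN : (N1 <= k + n)%N by apply: leq_trans nN1 (leq_addl _ _).
    have [am0 _ am2] := ab (k + n)%N mN m1.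
    apply: (@term_bound R _ _ _ (expR (eps * l (k + n))) _ _ _ _ d (ltW am0) am2).
    + by rewrite ler0n.
    + rewrite natrX -exprMn; apply: lerXn2r; rewrite ?nnegrE ?ler0n ?mulr_ge0 //.
      by rewrite -natrM ler_nat na2.
    + by rewrite ltr0n.
    + apply: le_trans (hC2 _) _; apply: ler_wpM2l; first exact: ltW.
      by rewrite ler_expR; apply: ler_wpM2l; [exact: ltW | exact: (@ll_sqrt R d d2 _)].
    + exact: expR_ge0.
    + rewrite -expRD ler_expR.
      have := ll_mono R d2 (leq_addl k n); rewrite -/L => hm.
      by apply: (sa7 (ltW L0) hm (sa9 ep0 ep3)).
    + by rewrite exprn_ge0.
    + exact: ltW.
  rewrite -mulr_sumr; apply: ler_wpM2l.
    by rewrite !mulr_ge0 ?exprn_ge0 ?expR_ge0 // ltW.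
  exact: inv_sq_sum.
Qed.

End MainAn.
Unset Implicit Arguments.

Theorem lemma8 (R : realType) (d : nat) (p q w1 : R)
  (Phi : probability (configT d) R) :
  (2 <= d)%N -> 1 <= q -> p <= 1 -> phat_c d q < p ->
  is_FK_limit p q Phi ->
  (forall (x : vtx d) (A : set (configT d)), measurable A ->
      Phi ((@translate d x) @^-1` A) = Phi A) ->
  0 < w1 ->
  (fun n : nat => ln (fine (Phi (@large_finite_origin d n)))
                  / (n%:R `^ ((d%:R - 1) / d%:R))) @ \oo --> - w1 ->
  forall x : vtx d,
    (fun n : nat => ln (fine (Phi (@mass_center_event d n x)))
                    / (n%:R `^ ((d%:R - 1) / d%:R))) @ \oo --> - w1.
Proof.
move=> d2 _ _ _ _ hT w0 hA x.
apply: (@an_main R d d2 (fun n => fine (Phi (@large_finite_origin d n)))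
   (fun n => fine (Phi (@mass_center_event d n x))) w1 w0).
- by move=> n; apply: P_ge0; apply: large_meas.
- by move=> n n0; apply: (@ineqL d R Phi hT n x n0).
- by move=> n B hB; apply: (@ineqU d R Phi hT n x B hB).
- exact: hA.
Qed.
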